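(* Fix an integer $r\ge2$ and two residues $s,k$ modulo $r$. Every $\mathscr C_{sk}^{(r)}$-hom-free $r$-graph is also $\mathscr C_k^{(r)}$-hom-free.
   Context: An $r$-graph is an $r$-uniform hypergraph. For $\ell>r$, the tight cycle $C_\ell^{(r)}$ has vertices $v_1,\dots,v_\ell$ and edges $\{v_i,\dots,v_{i+r-1}\}$, $1\le i\le\ell$ (indices mod $\ell$). A homomorphism $F\to G$ maps $V(F)\to V(G)$ sending each edge onto an edge. For a residue $j$ mod $r$, an $r$-graph is $\mathscr C_j^{(r)}$-hom-free if there is no homomorphism $C_\ell^{(r)}\to G$ for any $\ell>r$ with $\ell\equiv j\pmod r$. *)

(* Defs.v *)
From mathcomp Require Import all_boot.
Set Implicit Arguments. Unset Strict Implicit. Unset Printing Implicit Defensive.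

Definition uniform (V : finType) (r : nat) (E : {set {set V}}) : Prop :=
  forall e, e \in E -> #|e| = r.

(* A homomorphism from the tight cycle C_l^(r) (vertices v_0..v_{l-1}, edges
   {v_i,...,v_{i+r-1}} indices mod l) into (V,E), given as a vertex map
   f : nat -> V read on indices modulo l: the image of every edge is an edge. *)
Definition tight_cycle_hom (V : finType) (E : {set {set V}}) (r l : nat)
    (f : nat -> V) : Prop :=
  forall i, i < l -> [set f ((i + j) %% l) | j : 'I_r] \in E.

Definition hom_free (V : finType) (E : {set {set V}}) (r j : nat) : Prop :=
  forall (l : nat) (f : nat -> V), r < l -> l = j %[mod r] ->
    ~ tight_cycle_hom E r l f.

(* Main.v *)
Require Import Defs.
From mathcomp Require Import all_boot.

Theorem proposition3p10 (r s k : nat) (V : finType) (E : {set {set V}}) :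
  2 <= r -> uniform r E -> hom_free E r (s * k) -> hom_free E r k.
Proof.
move=> r2 _ Hf l f rl lk Hh.
have l0 : 0 < l by apply: leq_ltn_trans rl.
apply: (Hf ((s + r) * l) (fun n => f (n %% l))).
- rewrite mulnDl; apply: (leq_trans rl); rewrite -{1}(mul1n l).
  apply: leq_trans (leq_addl _ _); rewrite leq_mul2r; apply/orP; right.
  by apply: leq_trans r2.
- rewrite mulnDl -modnDm modnMr addn0 modn_mod.
  by rewrite -modnMmr lk modnMmr.
- move=> i _.
  have dl : l %| (s + r) * l by apply: dvdn_mull.
  have -> : [set f ((i + j) %% ((s + r) * l) %% l) | j : 'I_r]
          = [set f (((i %% l) + j) %% l) | j : 'I_r].
    by apply: eq_imset => j /=; rewrite modn_dvdm // modnDml.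
  by apply: Hh; rewrite ltn_mod.
Qed.
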